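(* There are infinitely many connected graphs $G$ with $\omega(G)<\chi(G)$ for which $\overline{\mathrm{scs}}(G)=n-2$, where $n$ is the order of $G$.
   Context: All graphs are finite and simple; $\omega(G)$ is the clique number. For a graph $G=(V,E)$ with $k=\chi(G)$, a proper $k$-colouring is a map $c:V\to[k]$ with $c(u)\neq c(v)$ for every edge $uv$. A set $S\subseteq V$ is a determining set for $(G,c)$ if there is no proper $k$-colouring $c'\neq c$ with $c'(s)=c(s)$ for all $s\in S$; a critical set is an inclusion-minimal determining set. $\mathrm{scs}(G,c)$ is the size of a smallest critical set for $(G,c)$, and $\overline{\mathrm{scs}}(G)$ is the maximum of $\mathrm{scs}(G,c)$ over all proper $\chi(G)$-colourings $c$ of $G$. *)

(* Defs.v *)
From mathcomp Require Import all_boot.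
Set Implicit Arguments. Unset Strict Implicit. Unset Printing Implicit Defensive.

Section Graphs.
Variable T : finType.
Variable e : rel T.

Definition simple_graph : Prop := symmetric e /\ irreflexive e.

Definition connected_graph : Prop := forall x y : T, connect e x y.

Definition clique (S : {set T}) : bool :=
  [forall x in S, forall y in S, (x != y) ==> e x y].

Definition omega : nat := \max_(S : {set T} | clique S) #|S|.

Definition proper_col (k : nat) (c : {ffun T -> 'I_k}) : bool :=
  [forall x, forall y, ((x != y) && e x y) ==> (c x != c y)].

Definition colourable (k : nat) : bool :=
  [exists c : {ffun T -> 'I_k}, proper_col c].

(* chromatic number: least k admitting a proper k-colouring
   (#|T| colours always suffice, so the minimum over k <= #|T| is correct) *)
Definition chi : nat := \big[minn/#|T|]_(k < #|T|.+1 | colourable k) (k : nat).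

Definition determining (k : nat) (c : {ffun T -> 'I_k}) (S : {set T}) : bool :=
  [forall c' : {ffun T -> 'I_k},
     (proper_col c' && [forall s in S, c' s == c s]) ==> (c' == c)].

Definition critical (k : nat) (c : {ffun T -> 'I_k}) (S : {set T}) : bool :=
  determining c S && [forall S' : {set T}, (S' \proper S) ==> ~~ determining c S'].

(* size of a smallest critical set (critical sets always exist, of size <= #|T|) *)
Definition scs (k : nat) (c : {ffun T -> 'I_k}) : nat :=
  \big[minn/#|T|]_(S : {set T} | critical c S) #|S|.

Definition scs_bar : nat :=
  \max_(c : {ffun T -> 'I_chi} | proper_col c) scs c.

End Graphs.

(* Main.v *)
Require Import Defs.
From mathcomp Require Import all_boot.
From mathcomp Require Import zify.
Set Implicit Arguments. Unset Strict Implicit. Unset Printing Implicit Defensive.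

Lemma bigmin_le_seq (I : eqType) (r : seq I) (P : pred I) (F : I -> nat) idx i0 :
  i0 \in r -> P i0 -> \big[minn/idx]_(i <- r | P i) F i <= F i0.
Proof.
elim: r => [|x r IH] //= Hin HP.
rewrite big_cons; move: Hin; rewrite in_cons => /orP [/eqP <-|Hr].
  by rewrite HP geq_minl.
case: ifP => _; last exact: IH.
by rewrite geq_min IH ?orbT.
Qed.

Lemma bigmin_le (I : finType) (P : pred I) (F : I -> nat) idx i0 :
  P i0 -> \big[minn/idx]_(i | P i) F i <= F i0.
Proof. by move=> HP; apply: bigmin_le_seq => //; rewrite mem_index_enum. Qed.

Lemma bigmin_ge (I : finType) (P : pred I) (F : I -> nat) idx m :
  m <= idx -> (forall i, P i -> m <= F i) -> m <= \big[minn/idx]_(i | P i) F i.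
Proof.
move=> Hidx HF; apply: (big_ind (fun x => m <= x)) => //.
by move=> x y Hx Hy; rewrite leq_min Hx Hy.
Qed.

Section Gen.
Variables (T : finType) (e : rel T) (k : nat) (c : {ffun T -> 'I_k}).

Lemma crit_exists S : determining e c S ->
  exists S', critical e c S' && (#|S'| <= #|S|).
Proof.
move=> HS.
pose P := [pred X : {set T} | determining e c X && (X \subset S)].
have P0 : P S by rewrite /P inE HS subxx.
case: (@arg_minnP _ S P (fun X : {set T} => #|X|) P0) => X; rewrite /P inE => /andP [HX XS] Hmin.
exists X; rewrite /critical HX /=; apply/andP; split; last first.
  by have := Hmin S P0.
apply/forallP => Y; apply/implyP => HY; apply/negP => HdY.
have := Hmin Y; rewrite inE HdY /= (subset_trans (proper_sub HY) XS) => /(_ isT).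
by rewrite leqNgt proper_card.
Qed.

Lemma scs_le S : determining e c S -> scs e c <= #|S|.
Proof.
case/crit_exists => S' /andP [H1 H2].
by apply: leq_trans H2; apply: bigmin_le.
Qed.

Lemma scs_ge m : m <= #|T| -> (forall S, determining e c S -> m <= #|S|) ->
  m <= scs e c.
Proof.
move=> H1 H2; apply: bigmin_ge => // S /andP [HS _]; exact: H2.
Qed.
End Gen.

Section Cyc.
Variable q : nat.
Hypothesis hq : 2 <= q.
Local Notation n := (2*q).+1.

Definition cycn (x y : nat) : bool :=
  (y.+1 == x) || (x.+1 == y) || ((x == 0) && (y == 2*q)) || ((y == 0) && (x == 2*q)).
Definition cyc : rel 'I_n := fun x y => cycn x y.

Lemma cyc_sym : symmetric cyc.
Proof. move=> x y; rewrite /cyc /cycn; apply/idP/idP => H; lia. Qed.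

Lemma cyc_irr : irreflexive cyc.
Proof. move=> x; rewrite /cyc /cycn; apply/negP => H; lia. Qed.

Definition vx (t : nat) : 'I_n := inord (t %% n).

Lemma val_vx t : (vx t : nat) = t %% n.
Proof. by rewrite /vx inordK // ltn_pmod. Qed.

Lemma modadd x d : d < n ->
  (x + d) %% n = if x %% n + d < n then x %% n + d else x %% n + d - n.
Proof.
move=> Hd; rewrite -modnDml; have := ltn_pmod x (ltn0Sn (2*q)).
set r := x %% n => Hr; case: ifP => H; first by rewrite modn_small.
rewrite {1}(_ : r + d = (r + d - n) + n); last by lia.
by rewrite modnDr modn_small //; lia.
Qed.

Lemma vxD_adj x d : d < n -> cyc (vx x) (vx (x + d)) = (d == 1) || (d == 2*q).
Proof.
move=> Hd; rewrite /cyc /cycn !val_vx modadd //.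
have := ltn_pmod x (ltn0Sn (2*q)); set r := x %% n => Hr.
case: ifP => H; apply/idP/idP => H'; lia.
Qed.

Lemma vxD_eq x d : d < n -> (vx x == vx (x + d)) = (d == 0).
Proof.
move=> Hd; have -> : (vx x == vx (x+d)) = (nat_of_ord (vx x) == nat_of_ord (vx (x+d))) by [].
rewrite !val_vx modadd //.
have := ltn_pmod x (ltn0Sn (2*q)); set r := x %% n => Hr.
case: ifP => H; apply/idP/idP => H'; lia.
Qed.

Lemma vxDn x : vx (x + n) = vx x.
Proof. by apply: ord_inj; rewrite !val_vx modnDr. Qed.

Lemma vx_ord (y : 'I_n) : vx y = y.
Proof. by apply: ord_inj; rewrite val_vx modn_small. Qed.

Lemma cyc_conn : connected_graph cyc.
Proof.
have H : forall i j, connect cyc (vx i) (vx (i + j)).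
  move=> i; elim=> [|j IH]; first by rewrite addn0.
  apply: connect_trans IH _; apply: connect1; rewrite addnS -addn1 vxD_adj //.
  by lia.
move=> x y; have := H x (n - x + y).
rewrite (_ : x + (n - x + y) = y + n); last by have := ltn_ord x; lia.
by rewrite vxDn !vx_ord.
Qed.

Lemma clique_small (S : {set 'I_n}) : clique cyc S -> #|S| <= 2.
Proof.
move=> /forallP HS; rewrite leqNgt; apply/negP => H3.
have /card_gt0P [x Hx] : 0 < #|S| by lia.
have := cardsD1 x S; rewrite Hx => E1.
have /card_gt0P [y Hy] : 0 < #|S :\ x| by lia.
have := cardsD1 y (S :\ x); rewrite Hy => E2.
have /card_gt0P [z Hz] : 0 < #|S :\ x :\ y| by lia.
move: Hy Hz; rewrite !in_setD1 => /andP [Hyx HyS] /andP [Hzy /andP [Hzx HzS]].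
have A : forall u v : 'I_n, u \in S -> v \in S -> u != v -> cycn u v.
  move=> u v Hu Hv Huv; have := HS u; rewrite Hu /= => /forallP /(_ v).
  by rewrite Hv Huv.
have Axy := A _ _ Hx HyS; have Axz := A _ _ Hx HzS; have Ayz := A _ _ HyS HzS.
move: Hyx Hzy Hzx Axy Axz Ayz; rewrite -!(inj_eq (@ord_inj n)) => Hyx Hzy Hzx Axy Axz Ayz.
have := Axy; rewrite eq_sym => /(_ Hyx) {}Axy.
have := Axz; rewrite eq_sym => /(_ Hzx) {}Axz.
have := Ayz; rewrite eq_sym => /(_ Hzy) {}Ayz.
have := ltn_ord x; have := ltn_ord y; have := ltn_ord z.
move: Axy Axz Ayz; rewrite /cycn; lia.
Qed.

Lemma properE k (c : {ffun 'I_n -> 'I_k}) : proper_col cyc c ->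
  forall x y, cyc x y -> c x != c y.
Proof.
move=> /forallP Hc x y Hxy; move/forallP: (Hc x) => /(_ y) /implyP; apply.
rewrite Hxy andbT; apply/eqP => E; move: Hxy; rewrite E.
by rewrite cyc_irr.
Qed.

Lemma col3 k (w z x y : 'I_k) : k <= 3 -> x != y -> w != x -> w != y -> z != x -> z != y -> w = z.
Proof.
move=> Hk; rewrite -!(inj_eq (@ord_inj k)) => *; apply: ord_inj.
have := ltn_ord w; have := ltn_ord z; have := ltn_ord x; have := ltn_ord y; lia.
Qed.

Section Col.
Variables (k : nat) (c : {ffun 'I_n -> 'I_k}).
Hypothesis Hc : proper_col cyc c.

Definition h u := c (vx u).

Lemma h_neq u : h u != h u.+1.
Proof. apply: (properE Hc); rewrite -addn1 vxD_adj //; lia. Qed.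

Lemma h_per u : h (u + n) = h u.
Proof. by rewrite /h vxDn. Qed.

Lemma no2 : k <= 2 -> False.
Proof.
move=> Hk.
have step : forall u, h u.+2 = h u.
  move=> u; apply: ord_inj; have := h_neq u; have := h_neq u.+1.
  rewrite -!(inj_eq (@ord_inj k)).
  have := ltn_ord (h u); have := ltn_ord (h u.+1); have := ltn_ord (h u.+2); lia.
have F : forall s, h (2*s) = h 0.
  elim=> [|s IH] //; rewrite (_ : 2 * s.+1 = (2*s).+2) ?step //; lia.
have := h_neq (2*q); rewrite F (_ : (2*q).+1 = 0 + n) // h_per eqxx //.
Qed.

Definition goodn t := h (t + 2*q) != h t.+1.

Lemma L v : exists2 s, s < q & goodn (v + 2 + 2*s).
Proof.
case: (boolP [exists s : 'I_q, goodn (v + 2 + 2*s)]) => [/existsP [s Hs]|/existsPn Hn].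
  by exists s.
exfalso.
have E : forall s, s < q -> h (v + 1 + 2*s) = h (v + 3 + 2*s).
  move=> s Hs; have := Hn (Ordinal Hs); rewrite /goodn negbK /= => /eqP Heq.
  rewrite -(h_per (v+1+2*s)) (_ : v+1+2*s+n = v+2+2*s+2*q); last by lia.
  by rewrite Heq (_ : (v+2+2*s).+1 = v+3+2*s) //; lia.
have F : forall s, s <= q -> h (v+1) = h (v+1+2*s).
  elim => [|s IH] Hs; first by rewrite addn0.
  rewrite IH; last by lia.
  rewrite E; last by lia.
  congr h; lia.
have := F q (leqnn q); rewrite (_ : v+1+2*q = v + n); last by lia.
rewrite h_per => Heq; have := h_neq v; by rewrite -addn1 Heq eqxx.
Qed.

Definition goodv (x : 'I_n) := exists x1 x2, [/\ cyc x x1, cyc x x2 & c x1 != c x2].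

Lemma goodn_v t : goodn t -> goodv (vx t).
Proof.
move=> G; exists (vx (t + 2*q)), (vx (t+1)); split.
- by rewrite vxD_adj ?eqxx ?orbT.
- rewrite vxD_adj //; lia.
- by rewrite addn1.
Qed.

Lemma pairP t d : 2 <= d <= 2*q - 1 -> goodv (vx t) -> goodv (vx (t + d)) ->
  exists a b, [/\ a != b, ~~ cyc a b, goodv a & goodv b].
Proof.
move=> Hd G1 G2; exists (vx t), (vx (t+d)); split => //.
- rewrite vxD_eq; lia.
- rewrite vxD_adj; lia.
Qed.

Lemma pair_ex : exists a b, [/\ a != b, ~~ cyc a b, goodv a & goodv b].
Proof.
have [s1 Hs1 G1] := L 0.
have [s2 Hs2 G2] := L (0 + 2 + 2*s1).
case: (ltnP s2 q.-1) => H2.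
  apply: (@pairP (0 + 2 + 2*s1) (2 + 2*s2)); first by lia.
    exact: goodn_v.
  by rewrite addnA; apply: goodn_v.
have E2 : 0 + 2 + 2 * s1 + 2 + 2 * s2 = (0 + 2 + 2*s1) + 2*q by lia.
rewrite E2 in G2.
have [s3 Hs3 G3] := L ((0 + 2 + 2*s1) + 2*q).
case: (posnP s3) => H3.
  apply: (@pairP ((0 + 2 + 2*s1) + 2*q) 2); first by lia.
    exact: goodn_v.
  move: G3; rewrite H3 muln0 addn0 => G3; exact: goodn_v.
apply: (@pairP (0 + 2 + 2*s1) (1 + 2*s3)); first by lia.
  exact: goodn_v.
have := goodn_v G3.
by rewrite (_ : 0 + 2 + 2 * s1 + 2 * q + 2 + 2 * s3 = (0 + 2 + 2*s1 + (1 + 2*s3)) + n) ?vxDn //; lia.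
Qed.

End Col.

Lemma det_pair k (c : {ffun 'I_n -> 'I_k}) (Hc : proper_col cyc c) (a b : 'I_n) :
  k <= 3 -> a != b -> ~~ cyc a b -> goodv c a -> goodv c b ->
  determining cyc c [set x | (x != a) && (x != b)].
Proof.
move=> Hk Hab Hnab Ga Gb.
apply/forallP => c'; apply/implyP => /andP [Hc' /forallP Hag].
have ag : forall x, x != a -> x != b -> c' x = c x.
  by move=> x Hxa Hxb; have := Hag x; rewrite inE Hxa Hxb /= => /eqP.
have fix1 : forall a b, ~~ cyc a b -> goodv c a ->
    (forall x, x != a -> x != b -> c' x = c x) -> c' a = c a.
  move=> u v Huv [x1 [x2 [H1 H2 H12]]] Hag'.
  have ne : forall x, cyc u x -> x != u /\ x != v.
    move=> x Hx; split; apply/eqP => E; move: Hx; rewrite E.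
      by rewrite cyc_irr.
    by move/negbTE: Huv => ->.
  have [n1 m1] := ne _ H1; have [n2 m2] := ne _ H2.
  apply: (@col3 k _ _ (c x1) (c x2) Hk H12).
  - by rewrite -(Hag' x1 n1 m1); apply: properE.
  - by rewrite -(Hag' x2 n2 m2); apply: properE.
  - exact: properE.
  - exact: properE.
apply/eqP/ffunP => x.
case: (eqVneq x a) => [->|Hxa]; first exact: (fix1 a b Hnab Ga ag).
case: (eqVneq x b) => [->|Hxb]; last exact: ag.
apply: (fix1 b a); [by rewrite cyc_sym | done | by move=> y H1 H2; apply: ag].
Qed.

Lemma scs_up (c : {ffun 'I_n -> 'I_3}) : proper_col cyc c -> scs cyc c <= 2*q - 1.
Proof.
move=> Hc; have [a [b [Hab Hnab Ga Gb]]] := pair_ex Hc.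
apply: leq_trans (scs_le (det_pair Hc _ Hab Hnab Ga Gb)) _ => //.
have -> : [set x | (x != a) && (x != b)] = ~: [set a; b].
  by apply/setP => x; rewrite !inE negb_or.
have := cardsC [set a; b]; rewrite cards2 Hab card_ord; lia.
Qed.

Lemma chi3 : chi cyc = 3.
Proof.
have C3 : colourable cyc 3.
  apply/existsP; exists [ffun i : 'I_n => inord (if i == 2*q :> nat then 2 else i %% 2) : 'I_3].
  apply/forallP => x; apply/forallP => y; apply/implyP => /andP [_ Hxy].
  rewrite !ffunE -(inj_eq (@ord_inj 3)) !inordK; last (by case: ifP => _; lia); last (by case: ifP => _; lia).
  move: Hxy; rewrite /cyc /cycn; have := ltn_ord x; have := ltn_ord y.
  case: ifP => ?; case: ifP => ?; lia.
apply/eqP; rewrite eqn_leq; apply/andP; split.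
  rewrite /chi; have -> : 3 = nat_of_ord (inord 3 : 'I_(#|'I_n|).+1) by rewrite inordK // card_ord; lia.
  by apply: bigmin_le; rewrite inordK // card_ord; lia.
apply: bigmin_ge; first by rewrite card_ord; lia.
move=> i /existsP [c Hc]; rewrite leqNgt; apply/negP => Hi.
by apply: (no2 Hc); lia.
Qed.


Definition mk (g : nat -> nat) : {ffun 'I_n -> 'I_3} := [ffun i : 'I_n => inord (g i)].

Lemma mk_proper g : (forall x, x < n -> g x < 3) ->
  (forall x y, x < n -> y < n -> cycn x y -> g x != g y) -> proper_col cyc (mk g).
Proof.
move=> Hg Hp; apply/forallP => x; apply/forallP => y; apply/implyP => /andP [_ Hxy].
rewrite !ffunE -(inj_eq (@ord_inj 3)) !inordK ?Hg //.
exact: Hp.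
Qed.

Lemma mk_agree (g g' : nat -> nat) (S : {set 'I_n}) : (forall x : 'I_n, x \in S -> g x = g' x) ->
  [forall s in S, mk g s == mk g' s].
Proof.
move=> H; apply/forallP => s; apply/implyP => Hs; by rewrite !ffunE H.
Qed.

Definition g0 (x : nat) := if x == 2*q then 2 else x %% 2.

Lemma g0_lt x : g0 x < 3.
Proof. rewrite /g0; case: ifP => _; lia. Qed.

Lemma g0_proper : proper_col cyc (mk g0).
Proof.
apply: mk_proper => [x _|x y Hx Hy]; first exact: g0_lt.
rewrite /cycn /g0; do ! case: ifP => ?; lia.
Qed.

Lemma lb S : determining cyc (mk g0) S -> 2*q - 1 <= #|S|.
Proof.
move=> Hd; rewrite leqNgt; apply/negP => Hlt.
have Hcomp := cardsC S; rewrite card_ord in Hcomp.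
have refute : forall g, (forall x, x < n -> g x < 3) ->
    (forall x y, x < n -> y < n -> cycn x y -> g x != g y) ->
    (forall x : 'I_n, x \in S -> g x = g0 x) -> forall i : 'I_n, g i != g0 i -> False.
  move=> g Hg Hp Ha i Hi.
  move/forallP: Hd => /(_ (mk g)); rewrite mk_proper // mk_agree //= => /eqP E.
  move/ffunP: E => /(_ i); rewrite !ffunE => /(congr1 (@nat_of_ord 3)).
  rewrite !inordK ?Hg ?g0_lt // => E; by rewrite E eqxx in Hi.
have vS : forall (x : 'I_n) m, m <= 2*q -> x \in S -> (inord m : 'I_n) \notin S -> (x : nat) != m.
  move=> x m Hm Hx Hm'; apply/eqP => E.
  have E' : x = inord m by apply: ord_inj; rewrite inordK.
  by rewrite -E' Hx in Hm'.
case: (boolP [exists i : 'I_n, (0 < i < 2*q - 1) && (i \notin S)]).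
  case/existsP => i /andP [Hi HiS].
  apply: (refute (fun j : nat => if j == nat_of_ord i then 2 else g0 j) _ _ _ i).
  - by move=> x _; case: ifP => _ //; exact: g0_lt.
  - move=> x y Hx Hy; rewrite /cycn /g0; do ! case: ifP => ?; lia.
  - move=> x Hx; rewrite ifF //; apply/negP => /eqP E.
    have E' : x = i by apply: ord_inj.
    by rewrite -E' Hx in HiS.
  - rewrite eqxx /g0; case: ifP => ?; lia.
move/existsPn => Hall.
pose a0 : 'I_n := inord 0; pose a1 : 'I_n := inord (2*q - 1); pose a2 : 'I_n := inord (2*q).
have HS : forall x : 'I_n, x \notin S -> x = a0 \/ x = a1 \/ x = a2.
  move=> x Hx; have := Hall x; rewrite Hx andbT => H.
  have : (x : nat) = 0 \/ (x : nat) = 2*q - 1 \/ (x : nat) = 2*q.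
    by have := ltn_ord x; lia.
  case=> [E|[E|E]]; [left|right; left|right; right]; apply: ord_inj;
    rewrite /a0 /a1 /a2 inordK; lia.
have two : forall u v : 'I_n, (forall x, x \notin S -> x = u \/ x = v) -> False.
  move=> u v Huv.
  have : ~: S \subset [set u; v].
    apply/subsetP => x; rewrite inE => Hx; rewrite !inE.
    by case: (Huv x Hx) => ->; rewrite eqxx ?orbT.
  move/subset_leq_card; rewrite cards2 => H2.
  have : (u != v).+1 <= 2 by case: (u != v).
  lia.
case: (boolP (a0 \in S)) => H0.
  apply: (two a1 a2) => x Hx; case: (HS x Hx) => [E|[E|E]]; [|by left|by right].
  by rewrite E H0 in Hx.
case: (boolP (a1 \in S)) => H1.
  apply: (two a0 a2) => x Hx; case: (HS x Hx) => [E|[E|E]]; [by left| |by right].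
  by rewrite E H1 in Hx.
case: (boolP (a2 \in S)) => H2.
  apply: (two a0 a1) => x Hx; case: (HS x Hx) => [E|[E|E]]; [by left|by right|].
  by rewrite E H2 in Hx.
apply: (refute (fun j => if j == 2*q - 1 then 2 else if j == 2*q then 0
                          else if j == 0 then 2 else j %% 2) _ _ _ a0).
- move=> x _; do ! case: ifP => ?; lia.
- move=> x y Hx Hy; rewrite /cycn; do ! case: ifP => ?; lia.
- move=> x Hx.
  have n0 := vS x 0 (leq0n _) Hx H0.
  have n1 : (x : nat) != 2*q - 1 by apply: vS => //; lia.
  have n2 : (x : nat) != 2*q by apply: vS => //; lia.
  rewrite /g0; do ! case: ifP => ?; lia.
- rewrite /a0 inordK // /g0; do ! case: ifP => ?; lia.
Qed.

Lemma scsbar_eq k (Hk : k = 3) :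
  \max_(c : {ffun 'I_n -> 'I_k} | proper_col cyc c) scs cyc c = 2*q - 1.
Proof.
subst k; apply/eqP; rewrite eqn_leq; apply/andP; split.
  by apply/bigmax_leqP => c Hc; exact: scs_up.
apply: leq_trans (leq_bigmax_cond (mk g0) g0_proper).
apply: scs_ge; first by rewrite card_ord; lia.
exact: lb.
Qed.

End Cyc.

Theorem proposition1 :
  forall N : nat, exists (n : nat) (e : rel 'I_n),
    [/\ N <= n, simple_graph e, connected_graph e,
        omega e < chi e & scs_bar e = n - 2].
Proof.
move=> N.
have hq : 2 <= N + 2 by lia.
exists (2*(N+2)).+1, (@cyc (N+2)); split.
- lia.
- split; [exact: (@cyc_sym (N+2)) | exact: (@cyc_irr (N+2) hq)].
- exact: (@cyc_conn (N+2) hq).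
- rewrite (@chi3 (N+2) hq); apply: (@leq_ltn_trans 2) => //.
  by apply/bigmax_leqP => S; apply: (@clique_small (N+2) hq).
- rewrite /scs_bar (@scsbar_eq (N+2) hq _ (@chi3 (N+2) hq)); lia.
Qed.
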